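(* Let $\mathcal{H}$ be a separable Hilbert space with orthonormal basis $\{e_k\}_{k\in\mathbb{N}}$, $\mathcal{H}_n=\mathrm{span}\{e_1,\dots,e_n\}$, and let $\mathcal{S}$ be a closed subspace of $\mathcal{H}$ such that $\sup\{c[\mathcal{S},\mathcal{H}_n]:n\in\mathbb{N}\}<1$. Then $\overline{\bigcup_{n=1}^\infty(\mathcal{S}\cap\mathcal{H}_n)}=\mathcal{S}$.
   Context: For closed subspaces $\mathcal{M},\mathcal{N}$, $c[\mathcal{M},\mathcal{N}]=\sup\{|\langle\xi,\eta\rangle|:\xi\in\mathcal{M}\ominus(\mathcal{M}\cap\mathcal{N}),\ \eta\in\mathcal{N}\ominus(\mathcal{M}\cap\mathcal{N}),\ \|\xi\|=\|\eta\|=1\}$ (cosine of the Friedrichs angle). *)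

(* Defs.v *)
From HB Require Import structures.
From mathcomp Require Import all_boot all_order all_algebra.
From mathcomp Require Import all_classical reals.
From mathcomp Require Import complex.

Set Implicit Arguments.
Unset Strict Implicit.
Unset Printing Implicit Defensive.
Import Order.TTheory GRing.Theory Num.Theory.
Local Open Scope ring_scope.
Local Open Scope classical_set_scope.

Section Hilbert.
Variable R : realType.
Local Notation C := R[i].
Variable V : lmodType C.
Variable ip : V -> V -> C.

Definition is_inner_product : Prop :=
  [/\ forall (a : C) (x y z : V), ip (a *: x + y) z = a * ip x z + ip y z,
      forall x y : V, ip y x = (ip x y)^*,
      forall x : V, 0 <= ip x x
    & forall x : V, ip x x = 0 -> x = 0].

Definition ipnorm (x : V) : R := Num.sqrt (complex.Re (ip x x)).

Definition ip_cauchy (u : nat -> V) : Prop :=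
  forall eps : R, 0 < eps -> exists N : nat,
    forall m n : nat, (N <= m)%N -> (N <= n)%N -> ipnorm (u m - u n) < eps.

Definition ip_converges_to (u : nat -> V) (l : V) : Prop :=
  forall eps : R, 0 < eps -> exists N : nat,
    forall n : nat, (N <= n)%N -> ipnorm (u n - l) < eps.

Definition is_hilbert : Prop :=
  is_inner_product /\
  forall u : nat -> V, ip_cauchy u -> exists l : V, ip_converges_to u l.

Definition ip_closure (A : set V) : set V :=
  [set x | forall eps : R, 0 < eps -> exists2 a, A a & ipnorm (x - a) < eps].

Definition is_subspace (M : set V) : Prop :=
  M 0 /\ forall (a : C) (x y : V), M x -> M y -> M (a *: x + y).

Definition closed_subspace (M : set V) : Prop :=
  is_subspace M /\ ip_closure M `<=` M.

Definition span_first (e : nat -> V) (n : nat) : set V :=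
  [set x | exists c : nat -> C, x = \sum_(k < n) c k *: e k].

Definition is_ONB (e : nat -> V) : Prop :=
  (forall i j : nat, ip (e i) (e j) = (i == j)%:R) /\
  ip_closure (\bigcup_(n in [set: nat]) span_first e n) = [set: V].

Definition orth (L : set V) : set V := [set x | forall y, L y -> ip x y = 0].
Definition ominus (M L : set V) : set V := M `&` orth L.

Definition friedrichs_cos (M N : set V) : R :=
  sup [set r : R | exists x y : V,
         [/\ ominus M (M `&` N) x, ominus N (M `&` N) y,
             ipnorm x = 1, ipnorm y = 1 & r = complex.Re `|ip x y|]].

End Hilbert.

(* Main.v *)
Require Import Defs.
From HB Require Import structures.
From mathcomp Require Import all_boot all_order all_algebra.
From mathcomp Require Import all_classical reals.
From mathcomp Require Import complex.
From mathcomp Require Import ring lra.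
Import Order.TTheory GRing.Theory Num.Theory.
Local Open Scope ring_scope.
Local Open Scope classical_set_scope.

Section Basic.
Variable R : realType.
Local Notation C := R[i].
Variable V : lmodType C.
Variable ip : V -> V -> C.
Hypothesis hip : is_inner_product ip.

Lemma ipDl x y z : ip (x + y) z = ip x z + ip y z.
Proof. by case: hip => L _ _ _; have := L 1 x y z; rewrite scale1r mul1r. Qed.

Lemma ip0l z : ip 0 z = 0.
Proof. by apply: (@addrI _ (ip 0 z)); rewrite addr0 -ipDl addr0. Qed.

Lemma ipZl a x z : ip (a *: x) z = a * ip x z.
Proof. by case: hip => L _ _ _; have := L a x 0 z; rewrite addr0 ip0l addr0. Qed.

Lemma ipC x y : ip y x = (ip x y)^*.
Proof. by case: hip. Qed.

Lemma ipNl x z : ip (- x) z = - ip x z.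
Proof. by rewrite -scaleN1r ipZl mulN1r. Qed.

Lemma ipBl x y z : ip (x - y) z = ip x z - ip y z.
Proof. by rewrite ipDl ipNl. Qed.

Lemma ipDr x y z : ip z (x + y) = ip z x + ip z y.
Proof. by rewrite ipC ipDl rmorphD /= -!ipC. Qed.

Lemma ipZr a x z : ip z (a *: x) = a^* * ip z x.
Proof. by rewrite ipC ipZl rmorphM /= -ipC. Qed.

Lemma ip0r z : ip z 0 = 0.
Proof. by rewrite ipC ip0l conjC0. Qed.

Lemma ipNr x z : ip z (- x) = - ip z x.
Proof. by rewrite ipC ipNl rmorphN /= -ipC. Qed.

Lemma ipBr x y z : ip z (x - y) = ip z x - ip z y.
Proof. by rewrite ipDr ipNr. Qed.

Lemma ip_suml n (f : 'I_n -> V) z : ip (\sum_(k < n) f k) z = \sum_(k < n) ip (f k) z.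
Proof.
elim: n f => [|n IH] f; first by rewrite !big_ord0 ip0l.
by rewrite !big_ord_recr /= ipDl IH.
Qed.

Lemma ip_sumr n (f : 'I_n -> V) z : ip z (\sum_(k < n) f k) = \sum_(k < n) ip z (f k).
Proof.
elim: n f => [|n IH] f; first by rewrite !big_ord0 ip0r.
by rewrite !big_ord_recr /= ipDr IH.
Qed.

Definition n2 (x : V) : R := complex.Re (ip x x).

Lemma ipxx x : ip x x = (n2 x)%:C%C.
Proof.
case: hip => _ _ P _; have := P x; rewrite /n2.
by case: (ip x x) => a b /ger0_Im /= ->.
Qed.

Lemma n2_ge0 x : 0 <= n2 x.
Proof. by case: hip => _ _ P _; have := P x; rewrite ipxx lecR. Qed.

Lemma n2_eq0 x : n2 x = 0 -> x = 0.
Proof. by case: hip => _ _ _ P; move=> h; apply: P; rewrite ipxx h. Qed.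

Lemma ipnormE x : ipnorm ip x = Num.sqrt (n2 x).
Proof. by []. Qed.

Lemma conjR (r : R) : (r%:C%C)^* = r%:C%C.
Proof. apply: conj_Creal; by rewrite complex_real. Qed.


Definition mo (x y : V) : R := complex.Re `|ip x y|.

Lemma normRe (z : C) : `|z| = (complex.Re `|z|)%:C%C.
Proof. by rewrite normc_def. Qed.

Lemma moE x y : `|ip x y| = (mo x y)%:C%C.
Proof. exact: normRe. Qed.

Lemma mo_ge0 x y : 0 <= mo x y.
Proof. by rewrite /mo normc_def /= sqrtr_ge0. Qed.

Lemma Re_le_mo x y : complex.Re (ip x y) <= mo x y.
Proof.
rewrite /mo normc_def /=; case: (ip x y) => a b /=.
apply: (le_trans (ler_norm a)); rewrite -sqrtr_sqr ler_sqrt ?addr_ge0 ?sqr_ge0 //.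
by rewrite lerDl sqr_ge0.
Qed.

Lemma mo_sq x y : ((mo x y) ^+ 2)%:C%C = ip x y * (ip x y)^*.
Proof. by rewrite rmorphXn /= -moE normCK. Qed.

Lemma CS x y : mo x y ^+ 2 <= n2 x * n2 y.
Proof.
have [b0|bn0] := eqVneq (n2 y) 0.
  by rewrite (n2_eq0 _ b0) /mo ip0r normr0 /= expr0n /= mulr_ge0 ?n2_ge0.
have bp : 0 < n2 y by rewrite lt_def bn0 n2_ge0.
set a := ip x y; set b := n2 y.
have E : (n2 (b%:C%C *: x - a *: y))%:C%C = (b * (b * n2 x - mo x y ^+ 2))%:C%C.
  rewrite -ipxx !ipBl !ipBr !ipZl !ipZr !ipxx conjR -/b (ipC x y) -/a.
  rewrite rmorphM rmorphB /= rmorphM /= mo_sq.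
  rewrite /a; ring.
have := n2_ge0 (b%:C%C *: x - a *: y); rewrite -lecR E /= => h.
rewrite -subr_ge0; move: h; rewrite (lecR 0); nra.
Qed.

Lemma n2D x y : n2 (x + y) = n2 x + n2 y + 2 * complex.Re (ip x y).
Proof.
apply: complexI; rewrite -ipxx ipDl !ipDr !ipxx (ipC x y).
rewrite !rmorphD rmorphM /= [(complex.Re (ip x y))%:C%C]complexRe ReE.
rewrite [in RHS]rmorphD /= rmorph1.
by field.
Qed.

Lemma ipnorm_ge0 x : 0 <= ipnorm ip x.
Proof. exact: sqrtr_ge0. Qed.

Lemma triangle x y : ipnorm ip (x + y) <= ipnorm ip x + ipnorm ip y.
Proof.
rewrite !ipnormE.
have sx := sqrtr_ge0 (n2 x); have sy := sqrtr_ge0 (n2 y).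
rewrite -[leRHS]ger0_norm ?addr_ge0 // -sqrtr_sqr ler_sqrt ?sqr_ge0 //.
rewrite n2D sqrrD !sqr_sqrtr ?n2_ge0 //.
have h1 := Re_le_mo x y.
have h2 : mo x y <= Num.sqrt (n2 x) * Num.sqrt (n2 y).
  rewrite -sqrtrM ?n2_ge0 // -[leLHS]ger0_norm ?mo_ge0 // -sqrtr_sqr.
  by rewrite ler_sqrt ?mulr_ge0 ?n2_ge0 // CS.
nra.
Qed.


Lemma n2N x : n2 (- x) = n2 x.
Proof. by rewrite /n2 ipNl ipNr opprK. Qed.

Lemma ipnormBC x y : ipnorm ip (x - y) = ipnorm ip (y - x).
Proof. by rewrite !ipnormE -n2N opprB. Qed.

Lemma n2Z (r : R) x : n2 (r%:C%C *: x) = r ^+ 2 * n2 x.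
Proof.
apply: complexI; rewrite -ipxx ipZl ipZr conjR ipxx.
by rewrite rmorphM rmorphXn /= expr2 mulrA.
Qed.

Lemma n2_orth a b : ip a b = 0 -> n2 (a + b) = n2 a + n2 b.
Proof. by move=> h; rewrite n2D h /= mulr0 addr0. Qed.

Lemma mo0 x y : mo x y = 0 -> ip x y = 0.
Proof. by move=> h; apply/eqP; rewrite -normr_eq0 moE h. Qed.

Lemma orth_min w z : (forall t : C, n2 w <= n2 (w - t *: z)) -> ip w z = 0.
Proof.
move=> H; set a := ip w z.
have zp := n2_ge0 z.
set s := (n2 z + 1)^-1.
have sp : 0 < s by rewrite invr_gt0; lra.
have s1 : s * (n2 z + 1) = 1 by rewrite mulVf //; apply: lt0r_neq0; lra.
have E : (n2 (w - (s%:C%C * a) *: z))%:C%C =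
         (n2 w + mo w z ^+ 2 * (s ^+ 2 * n2 z - 2 * s))%:C%C.
  rewrite -ipxx !ipBl !ipBr !ipZl !ipZr !ipxx (ipC w z) -/a rmorphM /= conjR.
  rewrite [RHS]rmorphD /= [in RHS]rmorphM /= mo_sq rmorphB /= !rmorphM /= rmorph_nat /a; ring.

have := H (s%:C%C * a); rewrite -lecR E lecR => h.
have u : s * (s * n2 z - 2) < 0 by rewrite pmulr_rlt0 //; nra.
have q0 : 0 <= mo w z ^+ 2 by rewrite sqr_ge0.
have : mo w z ^+ 2 = 0 by nra.
by move/eqP; rewrite sqrf_eq0 => /eqP /mo0.
Qed.


Section Span.
Variable e : nat -> V.
Hypothesis hon : forall i j : nat, ip (e i) (e j) = (i == j)%:R.

Lemma span0 n : span_first e n 0.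
Proof. by exists (fun _ => 0); rewrite big1 // => k _; rewrite scale0r. Qed.

Lemma span_lin n a x y : span_first e n x -> span_first e n y ->
  span_first e n (a *: x + y).
Proof.
move=> [c ->] [d ->]; exists (fun k => a * c k + d k).
rewrite scaler_sumr -big_split /=; apply: eq_bigr => k _.
by rewrite scalerDl scalerA.
Qed.

Lemma span_sub n m : (n <= m)%N -> span_first e n `<=` span_first e m.
Proof.
move=> nm x [c ->]; exists (fun k => if (k < n)%N then c k else 0).
rewrite (big_ord_widen m (fun k => c k *: e k) nm) big_mkcond /=.
apply: eq_bigr => k _; by case: ifP => //; rewrite scale0r.
Qed.

Lemma ip_e_span n (k : 'I_n) c : ip (e k) (\sum_(j < n) c j *: e j) = (c k)^*.
Proof.
rewrite ip_sumr (bigD1 k) //= big1 => [|j /negbTE jk].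
  by rewrite ipZr hon eqxx mulr1 addr0.
by rewrite ipZr hon (_ : (k == j :> nat) = false) ?mulr0 // eq_sym; exact: jk.
Qed.

Definition P n w := \sum_(k < n) ip w (e k) *: e k.

Lemma P_span n w : span_first e n (P n w).
Proof. by exists (fun k => ip w (e k)). Qed.

Lemma P_orth n w h : span_first e n h -> ip (w - P n w) h = 0.
Proof.
move=> [c ->]; rewrite ipBl ip_sumr ip_suml; apply/eqP; rewrite subr_eq0; apply/eqP.
apply: eq_bigr => k _; by rewrite ipZr ipZl ip_e_span mulrC.
Qed.

Lemma P_n2 n w : n2 w = n2 (w - P n w) + n2 (P n w).
Proof. by rewrite -n2_orth ?subrK // P_orth //; apply: P_span. Qed.

Lemma P_best n w a : span_first e n a -> n2 (w - P n w) <= n2 (w - a).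
Proof.
move=> ha; have -> : w - a = (w - P n w) + (P n w - a) by rewrite addrA subrK.
rewrite [n2 (_ + (_ - a))]n2_orth; first by rewrite lerDl n2_ge0.
apply: P_orth; rewrite -scaleN1r addrC; apply: span_lin => //; apply: P_span.
Qed.

Lemma ip_w_P n w : ip w (P n w) = (n2 (P n w))%:C%C.
Proof.
have := @P_orth n w _ (P_span n w); rewrite ipBl => /eqP; rewrite subr_eq0 => /eqP ->.
exact: ipxx.
Qed.

End Span.


Lemma n2_of_norm1 x : ipnorm ip x = 1 -> n2 x = 1.
Proof. by move=> h; rewrite -(sqr_sqrtr (n2_ge0 x)) -ipnormE h expr1n. Qed.

Lemma fc_ub M N : ubound [set r : R | exists x y : V,
         [/\ ominus ip M (M `&` N) x, ominus ip N (M `&` N) y,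
             ipnorm ip x = 1, ipnorm ip y = 1 & r = complex.Re `|ip x y|]] 1.
Proof.
move=> r [x [y [_ _ /n2_of_norm1 hx /n2_of_norm1 hy ->]]].
have := CS x y; rewrite hx hy mulr1 -/(mo x y) => h.
have := mo_ge0 x y; nra.
Qed.

Lemma fc_le1 M N : friedrichs_cos ip M N <= 1.
Proof.
rewrite /friedrichs_cos; set E := [set r | _].
have [ne|ne] := pselect (E !=set0).
  by apply: ge_sup => //; apply: fc_ub.
by rewrite sup_out ?ler01 // => -[].
Qed.

Lemma fc_ge M N x y : ominus ip M (M `&` N) x -> ominus ip N (M `&` N) y ->
  ipnorm ip x = 1 -> ipnorm ip y = 1 -> mo x y <= friedrichs_cos ip M N.
Proof.
move=> hx hy nx ny; apply: ub_le_sup; first by exists 1; apply: fc_ub.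
by exists x, y.
Qed.


Lemma inv_mono (N j : nat) : (N <= j)%N -> (j.+1%:R : R)^-1 <= (N.+1%:R)^-1.
Proof. by move=> h; rewrite lef_pV2 ?posrE ?ltr0Sn // ler_nat ltnS. Qed.

Lemma sqrt_add_le (a b : R) : 0 <= a -> 0 <= b ->
  Num.sqrt (a + b ^+ 2) <= Num.sqrt a + b.
Proof.
move=> a0 b0; have s0 := sqrtr_ge0 a.
rewrite -[leRHS]ger0_norm ?addr_ge0 // -sqrtr_sqr ler_sqrt ?sqr_ge0 //.
rewrite sqrrD sqr_sqrtr //; nra.
Qed.

Lemma ipnorm_lt x (eps : R) : 0 < eps -> n2 x < eps ^+ 2 -> ipnorm ip x < eps.
Proof.
move=> ep h; rewrite ipnormE -[eps]ger0_norm ?ltW // -sqrtr_sqr ltr_sqrt //.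
exact: exprn_gt0.
Qed.

Lemma n2_lt x (eps : R) : 0 < eps -> ipnorm ip x < eps -> n2 x < eps ^+ 2.
Proof.
move=> ep h; rewrite -ltr_sqrt ?exprn_gt0 // sqrtr_sqr ger0_norm ?ltW //.
Qed.

Lemma ReN (z : C) : complex.Re (- z) = - complex.Re z.
Proof. by case: z. Qed.

Lemma para a b : n2 (a + b) + n2 (a - b) = 2 * n2 a + 2 * n2 b.
Proof. rewrite !n2D n2N ipNr ReN; lra. Qed.


Section Main.
Variable e : nat -> V.
Hypothesis hon : forall i j : nat, ip (e i) (e j) = (i == j)%:R.
Hypothesis hdense : ip_closure ip (\bigcup_(n in [set: nat]) span_first e n) = [set: V].
Hypothesis hcompl : forall u : nat -> V, ip_cauchy ip u -> exists l : V, ip_converges_to ip u l.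
Variable S : set V.
Hypothesis hS : closed_subspace ip S.

Let T := \bigcup_(n in [set n : nat | (0 < n)%N]) (S `&` span_first e n).

Lemma S_lin a x y : S x -> S y -> S (a *: x + y).
Proof. by case: hS => -[_ h] _; apply: h. Qed.

Lemma T_lin a x y : T x -> T y -> T (a *: x + y).
Proof.
move=> [n /= n0 [Sx Hx]] [m /= m0 [Sy Hy]]; exists (maxn n m) => /=.
  by rewrite leq_max n0.
split; first exact: S_lin.
apply: span_lin; [exact: (@span_sub e n (maxn n m) (leq_maxl n m)) | exact: (@span_sub e m (maxn n m) (leq_maxr n m))].
Qed.

Lemma T0 : T 0.
Proof. exists 1%N => //; split; [by case: hS => -[] | exact: span0]. Qed.

Lemma T_S : T `<=` S.
Proof. by move=> x [n _ []]. Qed.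

Lemma closure_S : ip_closure ip T `<=` S.
Proof.
move=> x hx; case: hS => _; apply => eps ep.
by have [a /T_S Sa h] := hx eps ep; exists a.
Qed.


Lemma key (hc : sup [set friedrichs_cos ip S (span_first e n) | n in [set n : nat | (0 < n)%N]] < 1)
  w : S w -> (forall z, T z -> ip w z = 0) -> w = 0.
Proof.
move=> Sw wT.
set c := sup _ in hc.
set c' := Num.max c 0.
have c'1 : c' < 1 by rewrite /c' gt_max hc ltr01.
have c'0 : 0 <= c' by rewrite /c' le_max lexx orbT.
have [w0|wn0] := eqVneq (n2 w) 0; first exact: n2_eq0.
have wp : 0 < n2 w by rewrite lt_def wn0 n2_ge0.
have A : forall n, (0 < n)%N -> n2 (P e n w) <= c' ^+ 2 * n2 w.
  move=> n n0.
  have [p0|pn0] := eqVneq (n2 (P e n w)) 0.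
    by rewrite p0 mulr_ge0 ?sqr_ge0 ?n2_ge0.
  have pp : 0 < n2 (P e n w) by rewrite lt_def pn0 n2_ge0.
  set p := n2 (P e n w) in pn0 pp *.
  set a := Num.sqrt p; set b := Num.sqrt (n2 w).
  have ap : 0 < a by rewrite sqrtr_gt0.
  have bp : 0 < b by rewrite sqrtr_gt0.
  have pa : p = a ^+ 2 by rewrite sqr_sqrtr // ltW.
  have wb : n2 w = b ^+ 2 by rewrite sqr_sqrtr // ltW.
  set u := (b^-1)%:C%C *: w; set v := (a^-1)%:C%C *: P e n w.
  have nu : ipnorm ip u = 1.
    by rewrite ipnormE n2Z wb exprVn mulVf ?sqrtr1 // expf_neq0 // lt0r_neq0.
  have nv : ipnorm ip v = 1.
    by rewrite ipnormE n2Z -/p pa exprVn mulVf ?sqrtr1 // expf_neq0 // lt0r_neq0.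
  have Hu : ominus ip S (S `&` span_first e n) u.
    split; first by rewrite /u -[_ *: w]addr0; apply: S_lin => //; case: hS => -[].
    by move=> y [Sy Hy]; rewrite /u ipZl wT ?mulr0 //; exists n.
  have Hv : ominus ip (span_first e n) (S `&` span_first e n) v.
    split; first by rewrite /v -[_ *: P e n w]addr0; apply: span_lin; [exact: P_span | exact: span0].
    move=> y [Sy Hy]; rewrite /v ipZl.
    have := @P_orth e hon n w y Hy; rewrite ipBl (wT y); last by exists n.
    by rewrite sub0r => /eqP; rewrite oppr_eq0 => /eqP ->; rewrite mulr0.
  have := @fc_ge S (span_first e n) u v Hu Hv nu nv.
  have -> : mo u v = a / b.
    rewrite /mo /u /v ipZl ipZr conjR (@ip_w_P e hon n w) -/p -!rmorphM /=.
    rewrite expr0n /= addr0 sqrtr_sqr ger0_norm; last by rewrite !mulr_ge0 ?invr_ge0 ?ltW.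
    by rewrite pa; field; rewrite !lt0r_neq0.
  have h1 : friedrichs_cos ip S (span_first e n) <= c.
    apply: ub_le_sup; last by exists n.
    by exists 1 => r [k _ <-]; exact: fc_le1.
  have h2 : c <= c' by rewrite /c' le_max lexx.
  move=> h3; have : a / b <= c' by apply: (le_trans h3); apply: (le_trans h1).
  rewrite ler_pdivrMr // => h4.
  rewrite pa wb; nra.
have B : n2 w * (1 - c' ^+ 2) <= 0.
  apply/ler_addgt0Pr => d dp; rewrite add0r.
  have : ip_closure ip (\bigcup_(n in [set: nat]) span_first e n) w by rewrite hdense.
  move=> /(_ (Num.sqrt d)) []; first by rewrite sqrtr_gt0.
  move=> a [N _ Ha] hwa.
  set n := maxn N 1.
  have Han : span_first e n a := @span_sub e N n (leq_maxl N 1) a Ha.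
  have n0 : (0 < n)%N by rewrite leq_max orbT.
  have hwa2 : n2 (w - a) < d.
    have sd : 0 < Num.sqrt d by rewrite sqrtr_gt0.
    by have := @n2_lt (w - a) _ sd hwa; rewrite sqr_sqrtr // ltW.
  have := @P_n2 e hon n w; have := @P_best e hon n w a Han; have := A n n0.
  nra.
have k : 0 < 1 - c' ^+ 2 by nra.
have : n2 w <= 0 by nra.
by rewrite leNgt wp.
Qed.


Lemma main_incl (hc : sup [set friedrichs_cos ip S (span_first e n) | n in [set n : nat | (0 < n)%N]] < 1)
  x : S x -> ip_closure ip T x.
Proof.
move=> Sx.
set A := [set n2 (x - t) | t in T].
have A0 : A !=set0 by exists (n2 (x - 0)); exists 0 => //; exact: T0.
have Alb : has_lbound A by exists 0 => _ [t _ <-]; exact: n2_ge0.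
set d2 := inf A.
have d2lb : forall t, T t -> d2 <= n2 (x - t).
  by move=> t Tt; apply: ge_inf => //; exists t.
have d20 : 0 <= d2 by apply: lb_le_inf => // _ [t _ <-]; exact: n2_ge0.
have : forall k : nat, exists t, T t /\ n2 (x - t) < d2 + (k.+1%:R)^-1.
  move=> k; have kp : 0 < (k.+1%:R : R)^-1 by rewrite invr_gt0 ltr0Sn.
  have [_ [t Tt <-] h] := @inf_adherent _ A _ kp (conj A0 Alb).
  by exists t.
move=> /choice [f hf].
have fT k : T (f k) := (hf k).1.
have Cauchy : ip_cauchy ip f.
  move=> eps ep.
  have e4 : 0 < eps ^+ 2 / 4 by rewrite divr_gt0 // exprn_gt0.
  have [N hN] := ltr_add_invr e4; rewrite add0r in hN.
  exists N => j k hj hk; apply: ipnorm_lt => //.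
  set h := (2^-1 : R)%:C%C.
  set mid := h *: f j + (h *: f k + 0).
  have Tmid : T mid by apply: T_lin => //; apply: T_lin => //; exact: T0.
  have E : n2 ((x - f j) + (x - f k)) = 4 * n2 (x - mid).
    have -> : (x - f j) + (x - f k) = (2:R)%:C%C *: (x - mid).
      rewrite /mid /h addr0 scalerBr scalerDr !scalerA -!rmorphM /= mulfV ?pnatr_eq0 //.
      by rewrite rmorph1 !scale1r rmorph_nat scaler_nat mulr2n opprD addrACA.
    by rewrite n2Z; congr (_ * _); rewrite expr2 -natrM.
  have Pa := para (x - f j) (x - f k).
  have D : (x - f j) - (x - f k) = - (f j - f k) by rewrite opprB addrC addrA subrK opprB.
  move: Pa; rewrite D n2N E => Pa.
  have := d2lb _ Tmid; have := (hf j).2; have := (hf k).2.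
  have := @inv_mono N j hj; have := @inv_mono N k hk.
  move=> i1 i2 i3 i4 i5; move: i1 i2 i3 i4 i5 hN Pa.
  set ij := (j.+1%:R : R)^-1; set ik := (k.+1%:R : R)^-1; set iN := (N.+1%:R : R)^-1.
  lra.
have [m hm] := hcompl f Cauchy.
have clm : ip_closure ip T m.
  move=> eps ep; have [N hN] := hm eps ep; exists (f N) => //.
  by rewrite ipnormBC; exact: hN.
have Sm : S m := closure_S _ clm.
have Sw : S (x - m) by rewrite -scaleN1r addrC; apply: S_lin.
have up : ipnorm ip (x - m) <= Num.sqrt d2.
  apply/ler_addgt0Pr => dl dlp.
  have dl2 : 0 < dl / 2 by rewrite divr_gt0.
  have [N1 hN1] := hm (dl / 2) dl2.
  have [N2 hN2] := ltr_add_invr (exprn_gt0 2 dl2); rewrite add0r in hN2.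
  set k := maxn N1 N2.
  have h1 := hN1 k (leq_maxl _ _).
  have h2 : (k.+1%:R)^-1 < (dl / 2) ^+ 2 := le_lt_trans (@inv_mono N2 k (leq_maxr N1 N2)) hN2.
  have h3 : ipnorm ip (x - f k) <= Num.sqrt d2 + dl / 2.
    rewrite ipnormE; apply: (le_trans _ (@sqrt_add_le d2 (dl / 2) d20 (ltW dl2))).
    rewrite ler_sqrt ?addr_ge0 ?sqr_ge0 //; apply: ltW; apply: (lt_le_trans (hf k).2).
    by rewrite lerD2l; exact: ltW.
  have -> : x - m = (x - f k) + (f k - m) by rewrite addrA subrK.
  apply: le_trans (triangle _ _) _; lra.
have low : forall t z, T z -> Num.sqrt d2 <= ipnorm ip (x - m - t *: z).
  move=> t z Tz; apply/ler_addgt0Pr => dl dlp.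
  have [N hN] := hm dl dlp.
  have Tu : T (t *: z + f N) := @T_lin t z (f N) Tz (fT N).
  have h1 : Num.sqrt d2 <= ipnorm ip (x - (t *: z + f N)).
    by rewrite ipnormE ler_sqrt ?n2_ge0 // d2lb.
  have E : x - (t *: z + f N) = (x - m - t *: z) + (m - f N).
    by rewrite addrA [X in X - f N]addrAC subrK opprD addrA.
  rewrite E in h1; apply: (le_trans h1); apply: le_trans (triangle _ _) _.
  rewrite [ipnorm ip (m - f N)]ipnormBC; have := hN N (leqnn N); lra.
have wT : forall z, T z -> ip (x - m) z = 0.
  move=> z Tz; apply: orth_min => t.
  rewrite -(ler_sqrt _ (n2_ge0 _)); exact: le_trans up (low t z Tz).
have w0 := @key hc (x - m) Sw wT.
have -> : x = m by apply/eqP; rewrite -subr_eq0 w0.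
exact: clm.
Qed.

End Main.

End Basic.

(* H_n = span{e_1,...,e_n} is rendered as span_first e n = span{e 0,...,e (n-1)}
   with the basis indexed from 0. *)
Theorem lemma4p8 (R : realType) (V : lmodType R[i]) (ip : V -> V -> R[i])
  (hH : is_hilbert ip) (e : nat -> V) (he : is_ONB ip e)
  (S : set V) (hS : closed_subspace ip S)
  (hc : sup [set friedrichs_cos ip S (span_first e n) | n in [set n : nat | (0 < n)%N]] < 1) :
  ip_closure ip (\bigcup_(n in [set n : nat | (0 < n)%N]) (S `&` span_first e n)) = S.
Proof.
case: hH => hip hcompl; case: he => hon hdense.
apply/seteqP; split.
  exact: (@closure_S R V ip e S hS).
exact: (@main_incl R V ip hip e hon hdense hcompl S hS hc).
Qed.
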